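(* Let $n$ be a positive odd integer. Then, modulo $\Phi_n(q)$, \[ \sum_{k=0}^{n-1}\frac{(q;q^4)_k^2}{(q^4;q^4)_k^2}(-q)^{k} \equiv\begin{cases} \dfrac{(q,q^2,-q^3,-q^4;q^4)_{(n-1)/8}}{(q^4;q^4)_{(n-1)/4}}\,q^{(1-n^2)/8} &\text{if } n\equiv 1\pmod 8,\\[8pt] \dfrac{(q,q^2,-q^3,-q^4;q^4)_{(3n-1)/8}}{(q^4;q^4)_{(3n-1)/4}}\,q^{(1-n^2)/8} &\text{if } n\equiv 3\pmod 8,\\[8pt] -\dfrac{(1-q^2)(-q^3,-q^4,q^5,q^6;q^4)_{(n-5)/8}}{(q^4;q^4)_{(n-5)/4}}\,q^{(9-n^2)/8} &\text{if } n\equiv 5\pmod 8,\\[8pt] -\dfrac{(1-q^2)(-q^3,-q^4,q^5,q^6;q^4)_{(3n-5)/8}}{(q^4;q^4)_{(3n-5)/4}}\,q^{(9-n^2)/8} &\text{if } n\equiv 7\pmod 8. \end{cases} \]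
   Context: For an indeterminate $a$ and a nonnegative integer $k$, $(a;q)_k=\prod_{j=0}^{k-1}(1-aq^j)$, with $(a;q)_0=1$, and $(a_1,\dots,a_m;q)_k=(a_1;q)_k\cdots(a_m;q)_k$. $\Phi_n(q)=\prod_{1\le j\le n,\ \gcd(j,n)=1}(q-e^{2\pi i j/n})$ is the $n$-th cyclotomic polynomial. A congruence between rational functions in $q$ (possibly involving negative powers of $q$) modulo a polynomial $P(q)$ means that the difference, written as a ratio of polynomials with denominator coprime to $P(q)$, has numerator divisible by $P(q)$. *)

(* Defs.v *)
From HB Require Import structures.
From mathcomp Require Import all_boot all_order all_algebra.
From mathcomp Require Import fraction cyclotomic.
Set Implicit Arguments. Unset Strict Implicit. Unset Printing Implicit Defensive.
Import Order.TTheory GRing.Theory Num.Theory.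
Local Open Scope ring_scope.

Definition RF := {fraction {poly rat}}.

Definition toRF (p : {poly rat}) : RF := @FracField.tofrac _ p.

Definition qq : RF := toRF 'X.

Definition qpoch (a p : RF) (k : nat) : RF := \prod_(j < k) (1 - a * p ^+ j).

Definition Phi (n : nat) : {poly rat} := map_poly (intr : int -> rat) 'Phi_n.

Definition qcong (x y : RF) (P : {poly rat}) : Prop :=
  exists N M : {poly rat}, [/\ coprimep M P, P %| N & x - y = toRF N / toRF M].

(* Main.v *)
Require Import Defs.
From HB Require Import structures.
From mathcomp Require Import all_boot all_order all_algebra.
From mathcomp Require Import fraction cyclotomic.
From mathcomp Require Import all_field.
From mathcomp Require Import ring zify.
Import Order.TTheory GRing.Theory Num.Theory.
Local Open Scope ring_scope.

Module Aux.
Set Implicit Arguments. Unset Strict Implicit. Unset Printing Implicit Defensive.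

Section Coef.
Variable K : fieldType.

Definition Gp (a b : K) (N : nat) : {poly K} :=
  \prod_(j < N) (1 - (a * b ^+ j)%:P * 'X).

Lemma coef_lin (G : {poly K}) (c : K) i :
  (G * (1 - c%:P * 'X))`_i = G`_i - (if i is i'.+1 then c * G`_i' else 0).
Proof.
rewrite mulrBr mulr1 coefB mulrCA coefCM coefMX.
by case: i => [|i] /=; rewrite ?mulr0.
Qed.

Lemma Gp_rec a b N k :
  (Gp a b N)`_k.+1 * (b ^+ k.+1 - 1) = a * (Gp a b N)`_k * (b ^+ k - b ^+ N).
Proof.
elim: N k => [k|N IH k].
  rewrite /Gp big_ord0 !coef1 /=; case: k => [|k] /=; rewrite ?expr0 /=.
    by rewrite subrr !mulr0 mul0r.
  by rewrite !mul0r mulr0 mul0r.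
rewrite /Gp big_ord_recr /= -/(Gp a b N) !coef_lin.
case: k => [|k].
  have := IH 0%N; rewrite !expr0 !expr1 => H.
  rewrite mulrBl H exprS subr0.
  set g := (Gp a b N)`_0; set c := b ^+ N; ring.
have H1 := IH k.+1; have H0 := IH k.
rewrite mulrBl H1.
apply/eqP; rewrite -subr_eq0; apply/eqP.
transitivity (- (a * b ^+ N.+1) * ((Gp a b N)`_k.+1 * (b ^+ k.+1 - 1) - a * (Gp a b N)`_k * (b ^+ k - b ^+ N))).
  rewrite !exprS; set g0 := (Gp a b N)`_k; set g1 := (Gp a b N)`_k.+1; set c := b ^+ N; set d := b ^+ k; ring.
by apply/eqP; rewrite mulf_eq0 subr_eq0 H0 eqxx orbT.
Qed.

End Coef.

Section Coef2.
Variable K : fieldType.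

Lemma Gp_coef0 (a b : K) N : (Gp a b N)`_0 = 1.
Proof.
elim: N => [|N IH]; first by rewrite /Gp big_ord0 coef1.
by rewrite /Gp big_ord_recr /= -/(Gp a b N) coef_lin IH subr0.
Qed.

Lemma Gp_closed (a b : K) N k :
  (Gp a b N)`_k * \prod_(j < k) (b ^+ j.+1 - 1) = a ^+ k * \prod_(j < k) (b ^+ j - b ^+ N).
Proof.
elim: k => [|k IH]; first by rewrite !big_ord0 Gp_coef0 expr0 !mulr1.
rewrite !big_ord_recr /=.
transitivity (((Gp a b N)`_k.+1 * (b ^+ k.+1 - 1)) * \prod_(i < k) (b ^+ i.+1 - 1)).
  by rewrite mulrA mulrAC.
rewrite Gp_rec.
transitivity (a * (b ^+ k - b ^+ N) * ((Gp a b N)`_k * \prod_(i < k) (b ^+ i.+1 - 1))).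
  by rewrite -!mulrA; congr (_ * _); rewrite mulrCA.
rewrite IH exprS; ring.
Qed.

Definition Ap (w : nat -> K) N : {poly K} := \prod_(j < N) (1 + (w j)%:P * 'X).
Definition Bp (w : nat -> K) N : {poly K} := \prod_(j < N) ('X + (w j)%:P).

Lemma coefA1 (G : {poly K}) (c : K) i :
  (G * (1 + c%:P * 'X))`_i = G`_i + (if i is i'.+1 then c * G`_i' else 0).
Proof.
rewrite mulrDr mulr1 coefD mulrCA coefCM coefMX.
by case: i => [|i] /=; rewrite ?mulr0.
Qed.

Lemma coefB1 (G : {poly K}) (c : K) i :
  (G * ('X + c%:P))`_i = (if i is i'.+1 then G`_i' else 0) + c * G`_i.
Proof.
rewrite mulrDr coefD coefMX coefMC mulrC.
by case: i.
Qed.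

Lemma Ap_high w N i : (N < i)%N -> (Ap w N)`_i = 0.
Proof.
elim: N i => [|N IH] i Hi.
  by rewrite /Ap big_ord0 coef1; case: i Hi.
rewrite /Ap big_ord_recr /= -/(Ap w N) coefA1 IH ?(ltnW Hi) //.
by case: i Hi => [|i] //= Hi; rewrite IH // mulr0 addr0.
Qed.

Lemma Bp_high w N i : (N < i)%N -> (Bp w N)`_i = 0.
Proof.
elim: N i => [|N IH] i Hi.
  by rewrite /Bp big_ord0 coef1; case: i Hi.
rewrite /Bp big_ord_recr /= -/(Bp w N) coefB1 IH ?(ltnW Hi) // mulr0 addr0.
by case: i Hi => [|i] //= Hi; rewrite IH.
Qed.

Lemma Bp_rev w N k : (k <= N)%N -> (Bp w N)`_k = (Ap w N)`_(N - k).
Proof.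
elim: N k => [|N IH] k Hk.
  by case: k Hk => // _; rewrite /Bp /Ap !big_ord0.
rewrite /Bp /Ap big_ord_recr /= big_ord_recr /= -/(Bp w N) -/(Ap w N) coefB1 coefA1.
case: k Hk => [|k] Hk.
  by rewrite subn0 add0r Ap_high // add0r IH // subn0.
have -> : (N.+1 - k.+1 = N - k)%N by [].
case: (ltnP k N) => HkN.
  rewrite IH ?(ltnW HkN) // IH //.
  have -> : (N - k)%N = (N - k.+1).+1 by rewrite subnSK.
  by rewrite addrC.
have -> : k = N by apply/eqP; rewrite eqn_leq HkN -ltnS Hk.
by rewrite [X in _ * X]Bp_high // mulr0 addr0 subnn IH // subnn addr0.
Qed.

End Coef2.


Lemma interleave (R : comNzRingType) (f : nat -> R) m :
  \prod_(t < (2 * m)%N) f t = \prod_(j < m) (f (2 * j)%N * f (2 * j).+1).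
Proof.
elim: m => [|m IH]; first by rewrite muln0 !big_ord0.
have -> : (2 * m.+1 = (2 * m).+2)%N by rewrite mulnS.
by rewrite !big_ord_recr IH /= mulrA.
Qed.

Section Core.
Variable K : fieldType.

Definition pch (a b : K) (k : nat) : K := \prod_(j < k) (1 - a * b ^+ j).

Lemma prod_mulc (c : K) (f : nat -> K) k :
  \prod_(j < k) (c * f j) = c ^+ k * \prod_(j < k) f j.
Proof. by rewrite big_split /= prodr_const card_ord. Qed.

Lemma pchS a b k : pch a b k.+1 = pch a b k * (1 - a * b ^+ k).
Proof. by rewrite /pch big_ord_recr. Qed.

End Core.

Section AtRoot.
Variables (K : fieldType) (z : K) (m : nat).
Hypothesis Hz : z ^+ (4 * m).+1 = 1.
Hypothesis Hp : forall k, (0 < k <= m)%N -> z ^+ (4 * k) != 1.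

Local Notation p := (z ^+ 4).

Lemma zpm : z * p ^+ m = 1.
Proof. by rewrite -exprM -exprS. Qed.

Lemma pch_pp_neq0 k : (k <= m)%N -> pch p p k != 0.
Proof.
move=> Hk; apply/prodf_neq0 => j _.
rewrite -exprS -exprM subr_eq0 eq_sym; apply: Hp.
by rewrite /= (leq_trans _ Hk).
Qed.

Lemma Gcoef (a : K) k : (k <= m)%N ->
  (Gp (a * z) p m)`_k = a ^+ k * (pch z p k / pch p p k).
Proof.
move=> Hk; have := Gp_closed (a * z) p m k.
have -> : \prod_(j < k) (p ^+ j.+1 - 1) = (-1) ^+ k * pch p p k.
  rewrite /pch -(prod_mulc (-1) (fun j => 1 - p * p ^+ j)); apply: eq_bigr => j _; rewrite exprS; ring.
have -> : (a * z) ^+ k * \prod_(j < k) (p ^+ j - p ^+ m) = (- a) ^+ k * pch z p k.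
  transitivity (a ^+ k * \prod_(j < k) (z * (p ^+ j - p ^+ m))).
    by rewrite (prod_mulc z (fun j => p ^+ j - p ^+ m)) exprMn mulrA.
  transitivity (a ^+ k * \prod_(j < k) (-1 * (1 - z * p ^+ j))).
    congr (_ * _); apply: eq_bigr => j _; rewrite mulrBr zpm; ring.
  by rewrite (prod_mulc (-1) (fun j => 1 - z * p ^+ j)) /pch [(- a) ^+ k]exprNn mulrA [a ^+ k * _]mulrC.
move=> H; have Hn := pch_pp_neq0 Hk.
apply: (mulIf Hn); rewrite -[RHS]mulrA divfK //.
have Hs : (-1) ^+ k != 0 :> K by rewrite signr_eq0.
apply: (mulfI Hs); by rewrite mulrCA H [(- a) ^+ k]exprNn mulrA.
Qed.


Lemma Ap_w2 : Ap (fun j => z ^+ (4 * j + 2)) m = Gp (- z * z) p m.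
Proof.
rewrite /Ap /Gp; apply: eq_bigr => j _.
have E : z ^+ (4 * j + 2) = z * z * p ^+ j by rewrite exprD exprM expr2 mulrC.
by rewrite !mulNr -E polyCN mulNr opprK.
Qed.

Lemma Bp_w2 : Bp (fun j => z ^+ (4 * j + 2)) m =
  (\prod_(j < m) z ^+ (4 * j + 2))%:P * Ap (fun j => z ^+ (4 * j + 3)) m.
Proof.
have -> : Ap (fun j => z ^+ (4 * j + 3)) m =
    \prod_(j < m) (1 + (z ^+ (4 * (m - j.+1) + 3))%:P * 'X).
  by rewrite /Ap (reindex_inj rev_ord_inj).
rewrite /Bp rmorph_prod -big_split /=.
apply: eq_bigr => j _.
rewrite mulrDr mulr1 mulrA -polyCM -exprD.
have -> : (4 * j + 2 + (4 * (m - j.+1) + 3) = (4 * m).+1)%N.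
  have := ltn_ord j; lia.
by rewrite Hz polyC1 mul1r addrC.
Qed.

Lemma H_split : Gp z (- z ^+ 2) (2 * m) = Gp z p m * Ap (fun j => z ^+ (4 * j + 3)) m.
Proof.
rewrite /Gp /Ap (interleave (fun t => 1 - (z * (- z ^+ 2) ^+ t)%:P * 'X)) -big_split /=.
apply: eq_bigr => j _.
have E : (- z ^+ 2) ^+ (2 * j) = p ^+ j.
  by rewrite exprM sqrrN -[z ^+ 2 ^+ 2]exprM.
rewrite E; congr (_ * _).
have -> : z * (- z ^+ 2) ^+ (2 * j).+1 = - z ^+ (4 * j + 3).
  rewrite exprS E (exprD z (4 * j) 3) exprM mulNr mulrN; congr (- _).
  by rewrite mulrA -exprS mulrC.
by rewrite polyCN mulNr opprK.
Qed.

Lemma S_eval n : (m < n)%N ->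
  \sum_(k < n) pch z p k ^+ 2 / pch p p k ^+ 2 * (- z) ^+ k =
  (\prod_(j < m) z ^+ (4 * j + 2)) * (Gp z (- z ^+ 2) (2 * m))`_m.
Proof.
move=> Hmn.
rewrite (bigID (fun k : 'I_n => (k < m.+1)%N)) /=.
rewrite [X in _ + X]big1 ?addr0; last first.
  move=> k; rewrite -leqNgt => Hk.
  have -> : pch z p k = 0.
    apply/eqP/prodf_eq0; exists (Ordinal Hk) => //=; by rewrite zpm subrr.
  by rewrite expr0n /= !mul0r.
rewrite -(big_ord_widen _ (fun k => pch z p k ^+ 2 / pch p p k ^+ 2 * (- z) ^+ k) Hmn).
rewrite H_split -coefCM mulrCA -Bp_w2 coefM.
apply: eq_bigr => j _.
have Hj : (j <= m)%N by rewrite -ltnS.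
rewrite Bp_rev ?leq_subr // subKn // Ap_w2 Gcoef //.
have := Gcoef 1 Hj; rewrite mul1r expr1n mul1r => ->.
by rewrite -exprVn; ring.
Qed.


Lemma Q2 : (- z ^+ 2) ^+ 2 = p.
Proof. by rewrite sqrrN -exprM. Qed.

Lemma Q2j j : (- z ^+ 2) ^+ (2 * j) = p ^+ j.
Proof. by rewrite exprM Q2. Qed.

Lemma PairD r : \prod_(j < (2 * r)%N) ((- z ^+ 2) ^+ j.+1 - 1) = pch (- z ^+ 2) p r * pch p p r.
Proof.
rewrite (interleave (fun j => (- z ^+ 2) ^+ j.+1 - 1)) /pch -big_split /=.
apply: eq_bigr => i _.
have e1 : (- z ^+ 2) ^+ (2 * i).+1 = p ^+ i * (- z ^+ 2) by rewrite exprSr Q2j.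
have e2 : (- z ^+ 2) ^+ (2 * i).+2 = p ^+ i * p by rewrite [LHS]exprSr e1 -mulrA -expr2 Q2.
rewrite e1 e2; ring.
Qed.

Lemma PairN r : z ^+ (2 * r) * \prod_(j < (2 * r)%N) ((- z ^+ 2) ^+ j - (- z ^+ 2) ^+ (2 * m)) =
   pch z p r * pch (- z ^+ 3) p r.
Proof.
rewrite (interleave (fun j => (- z ^+ 2) ^+ j - (- z ^+ 2) ^+ (2 * m))) Q2j.
rewrite exprM -(prod_mulc (z ^+ 2) (fun i => ((- z ^+ 2) ^+ (2 * i) - p ^+ m) *
     ((- z ^+ 2) ^+ (2 * i).+1 - p ^+ m))).
rewrite /pch -big_split /=; apply: eq_bigr => i _.
have e1 : (- z ^+ 2) ^+ (2 * i).+1 = p ^+ i * (- z ^+ 2) by rewrite exprSr Q2j.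
rewrite e1 Q2j.
have H1 := zpm.
have -> : z ^+ 3 = z * z ^+ 2 by rewrite exprS.
transitivity ((z * p ^+ i - z * p ^+ m) * (z * (p ^+ i * - z ^+ 2) - z * p ^+ m)).
  rewrite expr2; ring.
rewrite H1; ring.
Qed.


Lemma H_even r : m = (2 * r)%N ->
  (Gp z (- z ^+ 2) (2 * m))`_m * (pch (- z ^+ 2) p r * pch p p r) = pch z p r * pch (- z ^+ 3) p r.
Proof.
move=> Hm; have C := Gp_closed z (- z ^+ 2) (2 * m) m.
have D : \prod_(j < m) ((- z ^+ 2) ^+ j.+1 - 1) = pch (- z ^+ 2) p r * pch p p r.
  by rewrite -PairD Hm.
have N : z ^+ m * \prod_(j < m) ((- z ^+ 2) ^+ j - (- z ^+ 2) ^+ (2 * m)) = pch z p r * pch (- z ^+ 3) p r.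
  by rewrite -PairN Hm.
by rewrite -D C N.
Qed.

Lemma H_odd r : m = (2 * r).+1 ->
  (Gp z (- z ^+ 2) (2 * m))`_m * (pch (- z ^+ 2) p r.+1 * pch p p r) = pch z p r.+1 * pch (- z ^+ 3) p r.
Proof.
move=> Hm; have C := Gp_closed z (- z ^+ 2) (2 * m) m.
have D : \prod_(j < m) ((- z ^+ 2) ^+ j.+1 - 1) =
   pch (- z ^+ 2) p r * pch p p r * ((- z ^+ 2) ^+ (2 * r).+1 - 1).
  have e : forall F : nat -> K, \prod_(j < m) F j = \prod_(j < (2 * r)%N) F j * F (2 * r)%N.
    by move=> F; rewrite Hm big_ord_recr.
  by rewrite (e (fun j => (- z ^+ 2) ^+ j.+1 - 1)) PairD.
have N : z ^+ m * \prod_(j < m) ((- z ^+ 2) ^+ j - (- z ^+ 2) ^+ (2 * m)) =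
   pch z p r * pch (- z ^+ 3) p r * (z * (- z ^+ 2) ^+ (2 * r) - z * (- z ^+ 2) ^+ (2 * m)).
  have e : forall F : nat -> K, z ^+ m * \prod_(j < m) F j =
      (z ^+ (2 * r) * \prod_(j < (2 * r)%N) F j) * (z * F (2 * r)%N).
    by move=> F; rewrite Hm big_ord_recr exprSr /=; ring.
  by rewrite (e (fun j => (- z ^+ 2) ^+ j - (- z ^+ 2) ^+ (2 * m))) PairN mulrBr.
rewrite D N in C.
rewrite !Q2j zpm (exprSr _ (2 * r)) Q2j in C.
rewrite !pchS.
apply/eqP; rewrite -subr_eq0; apply/eqP.
set H := (Gp z (- z ^+ 2) (2 * m))`_m.
set A := pch (- z ^+ 2) p r; set B := pch p p r; set Cz := pch z p r; set D3 := pch (- z ^+ 3) p r.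
transitivity (- (H * (A * B * (p ^+ r * - z ^+ 2 - 1)) - Cz * D3 * (z * p ^+ r - 1))).
  ring.
by rewrite C subrr oppr0.
Qed.

End AtRoot.


Section Dbl.
Variable K : fieldType.

Lemma pch_pm (c b : K) r : pch c b r * pch (- c) b r = pch (c ^+ 2) (b ^+ 2) r.
Proof.
rewrite /pch -big_split /=; apply: eq_bigr => j _.
rewrite -exprM mulnC exprM; ring.
Qed.

Lemma pch_double (b : K) r : pch b b (2 * r) = pch b (b ^+ 2) r * pch (b ^+ 2) (b ^+ 2) r.
Proof.
rewrite /pch (interleave (fun j => 1 - b * b ^+ j)) -big_split /=.
apply: eq_bigr => j _; rewrite exprS exprM; ring.
Qed.

Lemma pch_shift (a b : K) r : pch a b r.+1 = (1 - a) * pch (a * b) b r.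
Proof.
rewrite /pch big_ord_recl /= expr0 mulr1; congr (_ * _).
by apply: eq_bigr => j _; rewrite exprS mulrA.
Qed.

End Dbl.

Section Cases.
Variables (K : fieldType) (z : K) (m n : nat).
Hypothesis Hz : z ^+ (4 * m).+1 = 1.
Hypothesis Hp : forall k, (0 < k <= m)%N -> z ^+ (4 * k) != 1.
Hypothesis Hmn : (m < n)%N.
Local Notation p := (z ^+ 4).

Let C := \prod_(j < m) z ^+ (4 * j + 2).

Lemma Dbl r : pch (z ^+ 2) p r * pch (- z ^+ 2) p r * (pch p p r * pch (- p) p r) = pch p p (2 * r).
Proof. by rewrite !pch_pm pch_double -exprM. Qed.

Lemma even_case r : m = (2 * r)%N ->
  \sum_(k < n) pch z p k ^+ 2 / pch p p k ^+ 2 * (- z) ^+ k =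
  pch z p r * pch (z ^+ 2) p r * pch (- z ^+ 3) p r * pch (- p) p r / pch p p (2 * r) * C.
Proof.
move=> Hm; rewrite (S_eval Hz Hp Hmn).
have HE := H_even Hz Hm.
have P0 : pch p p (2 * r) != 0 by apply: (pch_pp_neq0 Hp); rewrite Hm.
rewrite -Dbl in P0 *.
move: P0; rewrite !mulf_eq0 !negb_or => /andP[/andP[Y2 A] /andP[B Ym]].
set H := (Gp z (- z ^+ 2) (2 * m))`_m in HE *.
have -> : H = pch z p r * pch (- z ^+ 3) p r / (pch (- z ^+ 2) p r * pch p p r).
  by rewrite -HE mulfK // mulf_neq0.
rewrite /C; field.
by rewrite Y2 A B Ym.
Qed.


Lemma odd_case r : m = (2 * r).+1 ->
  \sum_(k < n) pch z p k ^+ 2 / pch p p k ^+ 2 * (- z) ^+ k =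
  - ((1 - z ^+ 2) * pch (- z ^+ 3) p r * pch (- p) p r * pch (z ^+ 5) p r * pch (z ^+ 6) p r
      / pch p p (2 * r)) * (C * z).
Proof.
move=> Hm; rewrite (S_eval Hz Hp Hmn).
have HO := H_odd Hz Hm.
have E5 : pch z p r.+1 = (1 - z) * pch (z ^+ 5) p r by rewrite pch_shift -exprS.
have E6 : pch (z ^+ 2) p r.+1 = (1 - z ^+ 2) * pch (z ^+ 6) p r by rewrite pch_shift -exprD.
have D : pch (z ^+ 2) p r.+1 * pch (- z ^+ 2) p r.+1 * (pch p p r * pch (- p) p r) =
    pch p p (2 * r) * (1 - p * p ^+ (2 * r)).
  rewrite !pch_pm -exprM pchS pch_double -!exprM.
  change (z ^+ (2 * 2)) with p; rewrite !exprM; ring.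
have Hu : z * (p * p ^+ (2 * r)) = 1.
  by rewrite mulrA -exprS -exprM -exprD -Hz Hm; congr (z ^+ _); lia.
have P0 : pch p p (2 * r).+1 != 0 by apply: (pch_pp_neq0 Hp); rewrite Hm.
rewrite pchS in P0.
have P1 := P0; rewrite -D in P1.
move: P0; rewrite mulf_eq0 negb_or => /andP[P2 U0].
move: P1; rewrite !mulf_eq0 !negb_or => /andP[/andP[Y2 A] /andP[B Ym]].
have Y6 : pch (z ^+ 6) p r != 0 by move: Y2; rewrite E6 mulf_eq0 negb_or => /andP[].
have Z2 : 1 - z ^+ 2 != 0 by move: Y2; rewrite E6 mulf_eq0 negb_or => /andP[].
have z0 : z != 0 by apply/eqP => z0; move: Hu; rewrite z0 mul0r => /eqP; rewrite eq_sym oner_eq0.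
have Uz : p * p ^+ (2 * r) = z^-1 by rewrite -[LHS]mul1r -(mulVf z0) -mulrA Hu mulr1.
set H := (Gp z (- z ^+ 2) (2 * m))`_m in HO *.
have -> : H = (1 - z) * pch (z ^+ 5) p r * pch (- z ^+ 3) p r / (pch (- z ^+ 2) p r.+1 * pch p p r).
  by rewrite -E5 -HO mulfK // mulf_neq0.
have -> : pch p p (2 * r) = (1 - z ^+ 2) * pch (z ^+ 6) p r * pch (- z ^+ 2) p r.+1 *
     (pch p p r * pch (- p) p r) / (1 - p * p ^+ (2 * r)).
  by rewrite -E6 D mulfK.
rewrite Uz in U0 *.
have Z1 : z - 1 != 0.
  by apply: contra U0; rewrite subr_eq0 => /eqP ->; rewrite invr1 subrr.
rewrite /C; field.
by rewrite z0 Z1 Ym B A Y6 Z2.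
Qed.

End Cases.


Section Eval.
Variable n : nat.
Hypothesis n_gt0 : (0 < n)%N.

Definition pQC (p : {poly rat}) : {poly algC} := map_poly ratr p.
Definition ev (p : {poly rat}) (w : algC) : algC := (pQC p).[w].

Lemma evM p1 p2 w : ev (p1 * p2) w = ev p1 w * ev p2 w.
Proof. by rewrite /ev /pQC rmorphM hornerM. Qed.
Lemma evD p1 p2 w : ev (p1 + p2) w = ev p1 w + ev p2 w.
Proof. by rewrite /ev /pQC rmorphD hornerD. Qed.
Lemma evN p1 w : ev (- p1) w = - ev p1 w.
Proof. by rewrite /ev /pQC rmorphN hornerN. Qed.
Lemma evB p1 p2 w : ev (p1 - p2) w = ev p1 w - ev p2 w.
Proof. by rewrite evD evN. Qed.
Lemma ev1 w : ev 1 w = 1.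
Proof. by rewrite /ev /pQC rmorph1 hornerC. Qed.
Lemma evX w : ev 'X w = w.
Proof. by rewrite /ev /pQC map_polyX hornerX. Qed.
Lemma ev0 w : ev 0 w = 0.
Proof. by rewrite /ev /pQC rmorph0 horner0. Qed.

Lemma toRF_neq0 (p : {poly rat}) : p != 0 -> toRF p != 0.
Proof. by rewrite /toRF tofrac_eq0. Qed.

Definition prim (w : algC) := n.-primitive_root w.

Definition Rep (x : RF) (v : algC -> algC) :=
  exists A B : {poly rat}, x = toRF A / toRF B /\
    forall w, prim w -> ev B w != 0 /\ v w = ev A w / ev B w.

Lemma prim_ex : exists w, prim w.
Proof. by have [w Hw] := C_prim_root_exists n_gt0; exists w. Qed.

Lemma neq0_of_ev (B : {poly rat}) : (forall w, prim w -> ev B w != 0) -> B != 0.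
Proof.
move=> H; have [w Hw] := prim_ex.
by apply/eqP => B0; move: (H w Hw); rewrite B0 ev0 eqxx.
Qed.

Lemma Rep_ext x v u : Rep x v -> (forall w, prim w -> v w = u w) -> Rep x u.
Proof.
move=> [A [B [-> H]]] E; exists A, B; split => // w Hw.
by have [H1 H2] := H w Hw; split => //; rewrite -E.
Qed.

Lemma Rep_poly p : Rep (toRF p) (ev p).
Proof.
exists p, 1; split; first by rewrite /toRF tofrac1 divr1.
by move=> w _; rewrite ev1 oner_eq0 divr1.
Qed.

Lemma Rep_add x y v u : Rep x v -> Rep y u -> Rep (x + y) (fun w => v w + u w).
Proof.
move=> [A [B [-> H]]] [C [D [-> H']]].
have B0 : B != 0 by apply: neq0_of_ev => w /H [].
have D0 : D != 0 by apply: neq0_of_ev => w /H' [].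
exists (A * D + C * B), (B * D); split.
  rewrite /toRF tofracD !tofracM.
  have := toRF_neq0 B0; have := toRF_neq0 D0; rewrite /toRF => HD HB.
  exact: (addf_div _ _ HB HD).
move=> w Hw; have [H1 H2] := H w Hw; have [H1' H2'] := H' w Hw.
rewrite evD !evM mulf_neq0 //; split => //.
by rewrite H2 H2' addf_div.
Qed.

Lemma Rep_mul x y v u : Rep x v -> Rep y u -> Rep (x * y) (fun w => v w * u w).
Proof.
move=> [A [B [-> H]]] [C [D [-> H']]].
have B0 : B != 0 by apply: neq0_of_ev => w /H [].
have D0 : D != 0 by apply: neq0_of_ev => w /H' [].
exists (A * C), (B * D); split.
  by rewrite /toRF !tofracM mulf_div.
move=> w Hw; have [H1 H2] := H w Hw; have [H1' H2'] := H' w Hw.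
rewrite !evM mulf_neq0 //; split => //.
by rewrite H2 H2' mulf_div.
Qed.

Lemma Rep_opp x v : Rep x v -> Rep (- x) (fun w => - v w).
Proof.
move=> [A [B [-> H]]]; exists (- A), B; split.
  by rewrite /toRF tofracN mulNr.
move=> w Hw; have [H1 H2] := H w Hw; split => //.
by rewrite evN H2 mulNr.
Qed.

Lemma Rep_inv x v : Rep x v -> (forall w, prim w -> v w != 0) -> Rep (x^-1) (fun w => (v w)^-1).
Proof.
move=> [A [B [-> H]]] Hv.
have A0' : forall w, prim w -> ev A w != 0.
  move=> w Hw; have [H1 H2] := H w Hw; have := Hv w Hw.
  by rewrite H2; apply: contra => /eqP ->; rewrite mul0r.
exists B, A; split; first by rewrite invf_div.
move=> w Hw; have [H1 H2] := H w Hw; split; first exact: A0'.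
by rewrite H2 invf_div.
Qed.

Lemma Rep_one : Rep 1 (fun _ => 1).
Proof.
have := Rep_poly 1; rewrite /toRF tofrac1 => H.
by apply: Rep_ext H _ => w _; exact: ev1.
Qed.

Lemma Rep_zero : Rep 0 (fun _ => 0).
Proof.
have := Rep_poly 0; rewrite /toRF tofrac0 => H.
by apply: Rep_ext H _ => w _; exact: ev0.
Qed.

Lemma Rep_exp x v k : Rep x v -> Rep (x ^+ k) (fun w => v w ^+ k).
Proof.
move=> H; elim: k => [|k IH].
  by rewrite expr0; apply: Rep_ext Rep_one _ => w _; rewrite expr0.
rewrite exprSr; apply: Rep_ext (Rep_mul IH H) _ => w _; by rewrite exprSr.
Qed.

Lemma Rep_sum k (F : nat -> RF) (f : nat -> algC -> algC) :
  (forall i, (i < k)%N -> Rep (F i) (f i)) ->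
  Rep (\sum_(i < k) F i) (fun w => \sum_(i < k) f i w).
Proof.
elim: k => [|k IH] H.
  by rewrite big_ord0; apply: Rep_ext Rep_zero _ => w _; rewrite big_ord0.
rewrite big_ord_recr /=.
apply: Rep_ext (Rep_add (IH (fun i Hi => H i (ltnW Hi))) (H k (ltnSn k))) _.
by move=> w _; rewrite big_ord_recr.
Qed.

Lemma Rep_prod k (F : nat -> RF) (f : nat -> algC -> algC) :
  (forall i, (i < k)%N -> Rep (F i) (f i)) ->
  Rep (\prod_(i < k) F i) (fun w => \prod_(i < k) f i w).
Proof.
elim: k => [|k IH] H.
  by rewrite big_ord0; apply: Rep_ext Rep_one _ => w _; rewrite big_ord0.
rewrite big_ord_recr /=.
apply: Rep_ext (Rep_mul (IH (fun i Hi => H i (ltnW Hi))) (H k (ltnSn k))) _.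
by move=> w _; rewrite big_ord_recr.
Qed.

Lemma Rep_expz x v (e : int) : Rep x v -> (forall w, prim w -> v w != 0) ->
  Rep (x ^ e) (fun w => v w ^ e).
Proof.
move=> H Hv; case: e => k.
  exact: Rep_exp.
apply: Rep_inv (Rep_exp _ H) _ => w Hw.
by rewrite expf_neq0 // Hv.
Qed.

End Eval.


Section Cong.
Variable n : nat.
Hypothesis n_gt0 : (0 < n)%N.

Lemma pQC_Phi z0 : prim n z0 -> pQC (Phi n) = minCpoly z0.
Proof.
move=> Hz; rewrite (minCpoly_cyclotomic Hz) -(Cintr_Cyclotomic Hz) /pQC /Phi -map_poly_comp.
by apply: eq_map_poly => a /=; rewrite rmorph_int.
Qed.

Lemma Phi_dvd (F : {poly rat}) z0 : prim n z0 -> (Phi n %| F) = root (pQC F) z0.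
Proof.
move=> Hz; have [p [Dp mon] dv] := minCpolyP z0.
have E : p = Phi n.
  apply: (@map_inj_poly _ _ (@ratr algC)); first exact: fmorph_inj.
    by rewrite rmorph0.
  by rewrite -Dp -/(pQC _) (pQC_Phi Hz).
by rewrite -E dv.
Qed.

Lemma coprime_of_ev (M : {poly rat}) : (forall w, prim n w -> ev M w != 0) -> coprimep M (Phi n).
Proof.
move=> H; have [z0 Hz] := prim_ex n_gt0.
rewrite -(coprimep_map (@ratr algC)) -/(pQC M) -/(pQC (Phi n)) (pQC_Phi Hz) (minCpoly_cyclotomic Hz).
rewrite /cyclotomic; elim/big_ind: _ => [|a b Ha Hb|k Hk]; first exact: coprimep1.
  by rewrite coprimepMr Ha Hb.
rewrite coprimep_XsubC; apply: H.
by rewrite /prim prim_root_exp_coprime.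
Qed.

Lemma qcong_of_Rep x y v u : Rep n x v -> Rep n y u ->
  (forall w, prim n w -> v w = u w) -> qcong x y (Phi n).
Proof.
move=> [A [B [-> H]]] [C [D [-> H']]] E.
have B0 : B != 0 by apply: (neq0_of_ev n_gt0) => w /H [].
have D0 : D != 0 by apply: (neq0_of_ev n_gt0) => w /H' [].
exists (A * D - C * B), (B * D); split.
- apply: coprime_of_ev => w Hw; rewrite evM mulf_neq0 //.
    by have [] := H w Hw.
  by have [] := H' w Hw.
- have [z0 Hz] := prim_ex n_gt0.
  rewrite (Phi_dvd _ Hz) /root -/(ev _ z0) evB !evM.
  have [H1 H2] := H z0 Hz; have [H1' H2'] := H' z0 Hz.
  have := E z0 Hz; rewrite H2 H2' => /eqP.
  rewrite eqr_div // => /eqP ->.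
  by rewrite subrr.
- have HB := toRF_neq0 B0; have HD := toRF_neq0 D0.
  rewrite /toRF tofracB !tofracM.
  rewrite /toRF in HB HD.
  rewrite -mulNr (addf_div _ _ HB HD).
  congr (_ / _).
  by rewrite mulNr.
Qed.

End Cong.


Section Final.
Variable n : nat.
Hypothesis n_gt0 : (0 < n)%N.
Hypothesis n_odd : odd n.

Lemma prim_neq0 w : prim n w -> w != 0.
Proof.
move=> Hw; apply/eqP => w0; have := prim_expr_order Hw.
by rewrite w0 expr0n; case: n n_gt0 => // k _ /eqP; rewrite eq_sym oner_eq0.
Qed.

Lemma prim_4k w k : prim n w -> (0 < k < n)%N -> w ^+ (4 * k) != 1.
Proof.
move=> Hw /andP[k0 kn]; rewrite -(prim_order_dvd Hw) Gauss_dvdr.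
  by apply/negP => /(dvdn_leq k0); rewrite leqNgt kn.
by rewrite coprime_sym -[4%N]/(2 ^ 2)%N coprime_pexpl // coprime2n.
Qed.

Lemma pch_p_neq0 w k : prim n w -> (k < n)%N -> pch (w ^+ 4) (w ^+ 4) k != 0.
Proof.
move=> Hw Hk; apply/prodf_neq0 => j _.
rewrite -exprS -exprM subr_eq0 eq_sym; apply: prim_4k => //.
by rewrite /= (leq_trans _ Hk) // ltnS.
Qed.

Lemma RepQ : Rep n qq (fun w => w).
Proof. exists 'X, 1; split => [|w _]; first by rewrite /qq /toRF tofrac1 divr1. by rewrite ev1 oner_eq0 divr1 evX. Qed.

Lemma Rep_qpoch a b va vb k : Rep n a va -> Rep n b vb ->
  Rep n (qpoch a b k) (fun w => pch (va w) (vb w) k).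
Proof.
move=> Ha Hb; rewrite /qpoch.
apply: Rep_ext (Rep_prod n_gt0 (F := fun j => 1 - a * b ^+ j)
   (f := fun j w => 1 - va w * vb w ^+ j) _) _ => [j _ /=|//].
have := Rep_add n_gt0 (Rep_one n) (Rep_opp (Rep_mul n_gt0 Ha (Rep_exp n_gt0 j Hb))).
move=> H; exact: H.
Qed.

Lemma Rep_div x y v u : Rep n x v -> Rep n y u -> (forall w, prim n w -> u w != 0) ->
  Rep n (x / y) (fun w => v w / u w).
Proof. by move=> Hx Hy Hu; have H := Rep_mul n_gt0 Hx (Rep_inv Hy Hu); exact: H. Qed.

Lemma RepX4 : Rep n (qq ^+ 4) (fun w => w ^+ 4).
Proof. have H := Rep_exp n_gt0 4 RepQ; exact: H. Qed.

Lemma RepS :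
  Rep n (\sum_(k < n) (qpoch qq (qq ^+ 4) k) ^+ 2 / (qpoch (qq ^+ 4) (qq ^+ 4) k) ^+ 2 * (- qq) ^+ k)
    (fun w => \sum_(k < n) pch w (w ^+ 4) k ^+ 2 / pch (w ^+ 4) (w ^+ 4) k ^+ 2 * (- w) ^+ k).
Proof.
apply: (Rep_sum n_gt0 (F := fun k => (qpoch qq (qq ^+ 4) k) ^+ 2 / (qpoch (qq ^+ 4) (qq ^+ 4) k) ^+ 2 * (- qq) ^+ k)
   (f := fun k w => pch w (w ^+ 4) k ^+ 2 / pch (w ^+ 4) (w ^+ 4) k ^+ 2 * (- w) ^+ k)) => k Hk.
have NZ : forall w, prim n w -> pch (w ^+ 4) (w ^+ 4) k ^+ 2 != 0.
  by move=> w Hw; rewrite expf_neq0 // pch_p_neq0.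
have H := Rep_mul n_gt0 (Rep_div (Rep_exp n_gt0 2 (Rep_qpoch k RepQ RepX4))
   (Rep_exp n_gt0 2 (Rep_qpoch k RepX4 RepX4)) NZ) (Rep_exp n_gt0 k (Rep_opp RepQ)).
exact: H.
Qed.


Lemma RepR_even a b e : (b < n)%N ->
  Rep n (qpoch qq (qq ^+ 4) a * qpoch (qq ^+ 2) (qq ^+ 4) a
           * qpoch (- qq ^+ 3) (qq ^+ 4) a * qpoch (- qq ^+ 4) (qq ^+ 4) a
           / qpoch (qq ^+ 4) (qq ^+ 4) b * qq ^ e)
   (fun w => pch w (w ^+ 4) a * pch (w ^+ 2) (w ^+ 4) a * pch (- w ^+ 3) (w ^+ 4) a
           * pch (- w ^+ 4) (w ^+ 4) a / pch (w ^+ 4) (w ^+ 4) b * w ^ e).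
Proof.
move=> Hb.
have H1 := Rep_qpoch a RepQ RepX4.
have H2 := Rep_qpoch a (Rep_exp n_gt0 2 RepQ) RepX4.
have H3 := Rep_qpoch a (Rep_opp (Rep_exp n_gt0 3 RepQ)) RepX4.
have H4 := Rep_qpoch a (Rep_opp RepX4) RepX4.
have H5 := Rep_qpoch b RepX4 RepX4.
have NZ : forall w, prim n w -> pch (w ^+ 4) (w ^+ 4) b != 0 by move=> w Hw; exact: pch_p_neq0.
have H6 := Rep_expz n_gt0 e RepQ (fun w Hw => prim_neq0 Hw).
have H := Rep_mul n_gt0 (Rep_div (Rep_mul n_gt0 (Rep_mul n_gt0 (Rep_mul n_gt0 H1 H2) H3) H4) H5 NZ) H6.
exact: H.
Qed.

Lemma RepR_odd a b e : (b < n)%N ->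
  Rep n (- ((1 - qq ^+ 2) * qpoch (- qq ^+ 3) (qq ^+ 4) a
              * qpoch (- qq ^+ 4) (qq ^+ 4) a
              * qpoch (qq ^+ 5) (qq ^+ 4) a
              * qpoch (qq ^+ 6) (qq ^+ 4) a
              / qpoch (qq ^+ 4) (qq ^+ 4) b) * qq ^ e)
   (fun w => - ((1 - w ^+ 2) * pch (- w ^+ 3) (w ^+ 4) a * pch (- w ^+ 4) (w ^+ 4) a
           * pch (w ^+ 5) (w ^+ 4) a * pch (w ^+ 6) (w ^+ 4) a / pch (w ^+ 4) (w ^+ 4) b) * w ^ e).
Proof.
move=> Hb.
have H0 := Rep_add n_gt0 (Rep_one n) (Rep_opp (Rep_exp n_gt0 2 RepQ)).
have H3 := Rep_qpoch a (Rep_opp (Rep_exp n_gt0 3 RepQ)) RepX4.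
have H4 := Rep_qpoch a (Rep_opp RepX4) RepX4.
have H1 := Rep_qpoch a (Rep_exp n_gt0 5 RepQ) RepX4.
have H2 := Rep_qpoch a (Rep_exp n_gt0 6 RepQ) RepX4.
have H5 := Rep_qpoch b RepX4 RepX4.
have NZ : forall w, prim n w -> pch (w ^+ 4) (w ^+ 4) b != 0 by move=> w Hw; exact: pch_p_neq0.
have H6 := Rep_expz n_gt0 e RepQ (fun w Hw => prim_neq0 Hw).
have H := Rep_mul n_gt0 (Rep_opp (Rep_div (Rep_mul n_gt0 (Rep_mul n_gt0 (Rep_mul n_gt0 (Rep_mul n_gt0 H0 H3) H4) H1) H2) H5 NZ)) H6.
exact: H.
Qed.

Lemma C_val (w : algC) m : \prod_(j < m) w ^+ (4 * j + 2) = w ^+ (2 * m * m).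
Proof.
rewrite prodrXr; congr (w ^+ _).
elim: m => [|m IH]; first by rewrite big_ord0.
rewrite big_ord_recr /= IH; nia.
Qed.

Lemma pow_inv w a b k : prim n w -> (a + b = n * k)%N -> w ^+ a = w ^ (- (b%:Z)).
Proof.
move=> Hw Hab.
have w0 := prim_neq0 Hw.
have E : w ^+ a * w ^+ b = 1 by rewrite -exprD Hab exprM (prim_expr_order Hw) expr1n.
rewrite -invr_expz /=.
apply: (mulIf (expf_neq0 b w0)); rewrite E mulVf //.
exact: expf_neq0.
Qed.

Lemma finish_even w m r B k s : prim n w -> m = (2 * r)%N -> (m < n)%N ->
  ((4 * m).+1 = n * s)%N -> (2 * m * m + B = n * k)%N ->
  \sum_(i < n) pch w (w ^+ 4) i ^+ 2 / pch (w ^+ 4) (w ^+ 4) i ^+ 2 * (- w) ^+ i =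
  pch w (w ^+ 4) r * pch (w ^+ 2) (w ^+ 4) r * pch (- w ^+ 3) (w ^+ 4) r
   * pch (- w ^+ 4) (w ^+ 4) r / pch (w ^+ 4) (w ^+ 4) (2 * r) * w ^ (- (B%:Z)).
Proof.
move=> Hw Hm Hmn Hs Hk.
have Hz : w ^+ (4 * m).+1 = 1 by rewrite Hs exprM (prim_expr_order Hw) expr1n.
have Hp : forall k, (0 < k <= m)%N -> w ^+ (4 * k) != 1.
  move=> j /andP[j0 jm]; apply: prim_4k => //; rewrite j0 /=; exact: leq_ltn_trans jm Hmn.
rewrite (even_case Hz Hp Hmn Hm) C_val (pow_inv Hw Hk).
by [].
Qed.

Lemma finish_odd w m r B k s : prim n w -> m = (2 * r).+1 -> (m < n)%N ->
  ((4 * m).+1 = n * s)%N -> (2 * m * m + 1 + B = n * k)%N ->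
  \sum_(i < n) pch w (w ^+ 4) i ^+ 2 / pch (w ^+ 4) (w ^+ 4) i ^+ 2 * (- w) ^+ i =
  - ((1 - w ^+ 2) * pch (- w ^+ 3) (w ^+ 4) r * pch (- w ^+ 4) (w ^+ 4) r
      * pch (w ^+ 5) (w ^+ 4) r * pch (w ^+ 6) (w ^+ 4) r / pch (w ^+ 4) (w ^+ 4) (2 * r))
   * w ^ (- (B%:Z)).
Proof.
move=> Hw Hm Hmn Hs Hk.
have Hz : w ^+ (4 * m).+1 = 1 by rewrite Hs exprM (prim_expr_order Hw) expr1n.
have Hp : forall k, (0 < k <= m)%N -> w ^+ (4 * k) != 1.
  move=> j /andP[j0 jm]; apply: prim_4k => //; rewrite j0 /=; exact: leq_ltn_trans jm Hmn.
have E : w ^+ (2 * m * m) * w = w ^ (- (B%:Z)) by rewrite -exprSr -(pow_inv Hw Hk) addn1.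
by rewrite (odd_case Hz Hp Hmn Hm) C_val E.
Qed.

End Final.

End Aux.
Import Aux.

Theorem theorem4 (n : nat) (n_pos : (0 < n)%N) (n_odd : odd n) :
  let q := qq in
  let S := \sum_(k < n)
      (qpoch q (q ^+ 4) k) ^+ 2 / (qpoch (q ^+ 4) (q ^+ 4) k) ^+ 2 * (- q) ^+ k in
  let e1 := ((1 - (n ^ 2)%:Z) %/ 8)%Z in
  let e9 := ((9 - (n ^ 2)%:Z) %/ 8)%Z in
  [/\ (n %% 8 = 1)%N ->
        qcong S
          (qpoch q (q ^+ 4) ((n - 1) %/ 8) * qpoch (q ^+ 2) (q ^+ 4) ((n - 1) %/ 8)
           * qpoch (- q ^+ 3) (q ^+ 4) ((n - 1) %/ 8)
           * qpoch (- q ^+ 4) (q ^+ 4) ((n - 1) %/ 8)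
           / qpoch (q ^+ 4) (q ^+ 4) ((n - 1) %/ 4) * q ^ e1)
          (Phi n),
      (n %% 8 = 3)%N ->
        qcong S
          (qpoch q (q ^+ 4) ((3 * n - 1) %/ 8) * qpoch (q ^+ 2) (q ^+ 4) ((3 * n - 1) %/ 8)
           * qpoch (- q ^+ 3) (q ^+ 4) ((3 * n - 1) %/ 8)
           * qpoch (- q ^+ 4) (q ^+ 4) ((3 * n - 1) %/ 8)
           / qpoch (q ^+ 4) (q ^+ 4) ((3 * n - 1) %/ 4) * q ^ e1)
          (Phi n),
      (n %% 8 = 5)%N ->
        qcong S
          (- ((1 - q ^+ 2) * qpoch (- q ^+ 3) (q ^+ 4) ((n - 5) %/ 8)
              * qpoch (- q ^+ 4) (q ^+ 4) ((n - 5) %/ 8)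
              * qpoch (q ^+ 5) (q ^+ 4) ((n - 5) %/ 8)
              * qpoch (q ^+ 6) (q ^+ 4) ((n - 5) %/ 8)
              / qpoch (q ^+ 4) (q ^+ 4) ((n - 5) %/ 4)) * q ^ e9)
          (Phi n)
    & (n %% 8 = 7)%N ->
        qcong S
          (- ((1 - q ^+ 2) * qpoch (- q ^+ 3) (q ^+ 4) ((3 * n - 5) %/ 8)
              * qpoch (- q ^+ 4) (q ^+ 4) ((3 * n - 5) %/ 8)
              * qpoch (q ^+ 5) (q ^+ 4) ((3 * n - 5) %/ 8)
              * qpoch (q ^+ 6) (q ^+ 4) ((3 * n - 5) %/ 8)
              / qpoch (q ^+ 4) (q ^+ 4) ((3 * n - 5) %/ 4)) * q ^ e9)
          (Phi n)].
Proof.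
cbv zeta.
have Ht : forall c, (n %% 8 = c)%N -> n = (8 * (n %/ 8) + c)%N.
  by move=> c Hc; rewrite {1}(divn_eq n 8) Hc mulnC.
have He : forall (c : int) (B : nat), c - (n ^ 2)%:Z = - (B%:Z) * 8 -> ((c - (n ^ 2)%:Z) %/ 8)%Z = - (B%:Z).
  by move=> c B ->; rewrite mulzK.
split => Hmod; have Hn := Ht _ Hmod; move: (n %/ 8)%N Hn => t Hn.
- have -> : ((n - 1) %/ 8 = t)%N by lia.
  have -> : ((n - 1) %/ 4 = 2 * t)%N by lia.
  rewrite (He 1 (8 * t * t + 2 * t)); last by rewrite -mulnn; nia.
  apply: (qcong_of_Rep n_pos (RepS n_pos n_odd) (RepR_even n_pos n_odd _ _ _)) => [|w Hw].
    lia.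
  apply: (finish_even n_pos n_odd (m := (2 * t)%N) (k := (2 * t)%N) (s := 1%N)) => //; nia.
- have -> : ((3 * n - 1) %/ 8 = 3 * t + 1)%N by lia.
  have -> : ((3 * n - 1) %/ 4 = 2 * (3 * t + 1))%N by lia.
  rewrite (He 1 (8 * t * t + 6 * t + 1)); last by rewrite -mulnn; nia.
  apply: (qcong_of_Rep n_pos (RepS n_pos n_odd) (RepR_even n_pos n_odd _ _ _)) => [|w Hw].
    lia.
  apply: (finish_even n_pos n_odd (m := (6 * t + 2)%N) (k := (10 * t + 3)%N) (s := 3%N)) => //; nia.
- have -> : ((n - 5) %/ 8 = t)%N by lia.
  have -> : ((n - 5) %/ 4 = 2 * t)%N by lia.
  rewrite (He 9 (8 * t * t + 10 * t + 2)); last by rewrite -mulnn; nia.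
  apply: (qcong_of_Rep n_pos (RepS n_pos n_odd) (RepR_odd n_pos n_odd _ _ _)) => [|w Hw].
    lia.
  apply: (finish_odd n_pos n_odd (m := (2 * t + 1)%N) (k := (2 * t + 1)%N) (s := 1%N)) => //; nia.
- have -> : ((3 * n - 5) %/ 8 = 3 * t + 2)%N by lia.
  have -> : ((3 * n - 5) %/ 4 = 2 * (3 * t + 2))%N by lia.
  rewrite (He 9 (8 * t * t + 14 * t + 5)); last by rewrite -mulnn; nia.
  apply: (qcong_of_Rep n_pos (RepS n_pos n_odd) (RepR_odd n_pos n_odd _ _ _)) => [|w Hw].
    lia.
  apply: (finish_odd n_pos n_odd (m := (6 * t + 5)%N) (k := (10 * t + 8)%N) (s := 3%N)) => //; nia.
Qed.
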